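(* Let $a$ and $p$ be trigonometric polynomials such that $a$ satisfies the UEP identities with trigonometric polynomials $b_1,\dots,b_{J_a}$, and $p$ satisfies the UEP identities with trigonometric polynomials $q_1,\dots,q_{J_p}$. Then the product $ap$ satisfies the UEP identities with the family \[\{p\,b_j : j=1,\dots,J_a\}\cup\{a\,q_j : j=1,\dots,J_p\}\cup\{q_j\,b_k : j=1,\dots,J_p,\ k=1,\dots,J_a\}.\] Moreover, if the subdivision schemes associated to $a$, $p$ and $ap$ are convergent and the families $b_1,\dots,b_{J_a}$ and $q_1,\dots,q_{J_p}$ have $v_a$ and $v_p$ vanishing moments respectively, then the family above (for $ap$) has $v=\min\{v_a,v_p\}$ vanishing moments.
   Context: Trigonometric polynomials are written as $p(\omega)=\frac12\sum_{k\in\mathbb{Z}}\mathbf{p}(k)e^{i2k\pi\omega}$ with finitely supported coefficient sequence (mask) $\mathbf{p}$, $\omega\in[0,1)$. A trigonometric polynomial $p$ satisfies the UEP identities with trigonometric polynomials $q_1,\dots,q_J$ if for all $\omega\in[0,1)$: $p(\omega)\overline{p(\omega)}+\sum_{j=1}^J q_j(\omega)\overline{q_j(\omega)}=1$ and $p(\omega)\overline{p(\omega-1/2)}+\sum_{j=1}^J q_j(\omega)\overline{q_j(\omega-1/2)}=0$. The subdivision scheme associated to $p$ is the stationary scheme on $\mathbb{Z}$ with bi-infinite matrix $\mathbf{P}(k,m)=\mathbf{p}(k-2m)$; it is convergent if for each $k$ there is a continuous $\varphi_k$ with $\sup_m|\varphi_k(2^{-j}m)-(\mathbf{P}^j\delta_k)(m)|\to0$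 as $j\to\infty$ ($\delta_k$ the unit sequence at $k$). The number of vanishing moments of a family $q_1,\dots,q_J$ is $v=\min_{j}\mu_j$, where $\mu_j$ is the order of the zero of $q_j$ at $\omega=0$, i.e. $q_j^{(k)}(0)=0$ for $k=0,\dots,\mu_j-1$ and $q_j^{(\mu_j)}(0)\neq0$. *)

(* Defs.v *)
From Stdlib Require Import Reals ZArith List.
From Coquelicot Require Import Coquelicot.
Open Scope R_scope.

Definition cexpi (theta : R) : C := (cos theta, sin theta).

(* A finitely supported mask: (lo, [c_0; ...; c_{n-1}]) stands for the
   sequence k |-> c_{k-lo} for lo <= k < lo+n, and 0 elsewhere. *)
Definition mask := (Z * list C)%type.

Definition mask_coef (m : mask) (k : Z) : C :=
  if (fst m <=? k)%Z then nth (Z.to_nat (k - fst m)) (snd m) (RtoC 0) else RtoC 0.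

(* p(w) = 1/2 sum_k p(k) e^{i 2 k pi w} *)
Fixpoint eval_aux (i : Z) (l : list C) (w : R) : C :=
  match l with
  | nil => RtoC 0
  | c :: t => Cplus (Cmult c (cexpi (2 * IZR i * PI * w))) (eval_aux (i + 1) t w)
  end.

Definition eval (m : mask) (w : R) : C := Cmult (RtoC (1/2)) (eval_aux (fst m) (snd m) w).

Definition is_trig_poly (f : R -> C) : Prop := exists m : mask, forall w, f w = eval m w.

Definition csum (l : list C) : C := fold_right Cplus (RtoC 0) l.

Definition UEP (p : R -> C) (qs : list (R -> C)) : Prop :=
  is_trig_poly p /\ (forall q, In q qs -> is_trig_poly q) /\
  (forall w, Cplus (Cmult (p w) (Cconj (p w)))
                   (csum (map (fun q => Cmult (q w) (Cconj (q w))) qs)) = RtoC 1) /\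
  (forall w, Cplus (Cmult (p w) (Cconj (p (w - 1/2))))
                   (csum (map (fun q => Cmult (q w) (Cconj (q (w - 1/2)))) qs)) = RtoC 0).

(* One subdivision step: (P c)(k) = sum_l p(k - 2 l) c(l); only the
   (finitely many) l with k - 2l in the support of the mask contribute. *)
Fixpoint sub_aux (i : Z) (l : list C) (c : Z -> C) (k : Z) : C :=
  match l with
  | nil => RtoC 0
  | a :: t => Cplus (if Z.even (k - i) then Cmult a (c ((k - i) / 2)%Z) else RtoC 0)
                    (sub_aux (i + 1) t c k)
  end.

Definition subdiv (m : mask) (c : Z -> C) : Z -> C := fun k => sub_aux (fst m) (snd m) c k.

Definition delta (k : Z) : Z -> C := fun n => if Z.eqb n k then RtoC 1 else RtoC 0.

Definition subdiv_iter (m : mask) (j : nat) (k : Z) : Z -> C :=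
  Nat.iter j (subdiv m) (delta k).

Definition convergent (m : mask) : Prop :=
  forall k : Z, exists phi : R -> C,
    (forall x, continuous phi x) /\
    (forall eps, 0 < eps -> exists J : nat, forall j : nat, (J <= j)%nat ->
       forall n : Z, Cmod (Cminus (phi (IZR n / 2 ^ j)) (subdiv_iter m j k n)) <= eps).

Definition deriv_vanishes (f : R -> C) (n : nat) : Prop :=
  Derive_n (fun w => Re (f w)) n 0 = 0 /\ Derive_n (fun w => Im (f w)) n 0 = 0.

(* the family fs has v vanishing moments: v = min_j mu_j *)
Definition has_vm (fs : list (R -> C)) (v : nat) : Prop :=
  (forall f, In f fs -> forall k, (k < v)%nat -> deriv_vanishes f k) /\
  (exists f, In f fs /\ ~ deriv_vanishes f v).

(* Main.v *)
Require Import Defs.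
From Stdlib Require Import Reals ZArith List Lia Lra Classical.
From Coquelicot Require Import Coquelicot.
Open Scope R_scope.




Definition term (t : R * R * R) (w : R) : R :=
  let '(A, B, al) := t in A * cos (al * w) + B * sin (al * w).
Fixpoint sumT (l : list (R*R*R)) (w : R) : R :=
  match l with nil => 0 | t :: r => term t w + sumT r w end.
Definition dterm (t : R*R*R) : R*R*R := let '(A,B,al) := t in (al*B, -(al*A), al).

Lemma is_derive_term t w : is_derive (term t) w (term (dterm t) w).
Proof.
  destruct t as [[A B] al]; simpl.
  auto_derive_fun (fun x : R => A * cos (al * x) + B * sin (al * x)).
  intros H. specialize (H w I).
  replace (al * B * cos (al * w) + - (al * A) * sin (al * w)) with
    (A * (al * 1 * - sin (al * w)) + B * (al * 1 * cos (al * w))) by ring.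
  exact H.
Qed.

Lemma is_derive_sumT l w : is_derive (sumT l) w (sumT (map dterm l) w).
Proof.
  induction l; simpl.
  - apply (is_derive_const 0).
  - apply (is_derive_plus (term a) (sumT l)); auto. apply is_derive_term.
Qed.

Definition T (f : R -> R) := exists l, forall w, f w = sumT l w.

Lemma T_ex_derive f x : T f -> ex_derive f x.
Proof. intros [l Hl]. apply ex_derive_ext with (sumT l). intros; now rewrite Hl.
  eexists. apply is_derive_sumT. Qed.

Lemma T_Derive f : T f -> T (Derive f).
Proof. intros [l Hl]. exists (map dterm l). intros w.
  rewrite (Derive_ext f (sumT l)) by auto. apply is_derive_unique, is_derive_sumT. Qed.

Lemma T_Derive_n f n : T f -> T (Derive_n f n).
Proof. intros H; induction n; simpl. destruct H as [l Hl]; exists l; auto.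
  apply T_Derive; auto. Qed.

Lemma T_ex_derive_n f n x : T f -> ex_derive_n f n x.
Proof. intros H; destruct n; simpl; auto. apply T_ex_derive, T_Derive_n, H. Qed.

Lemma sumT_app l1 l2 w : sumT (l1 ++ l2) w = sumT l1 w + sumT l2 w.
Proof. induction l1; simpl; [ring|rewrite IHl1; ring]. Qed.

Lemma T_plus f g : T f -> T g -> T (fun x => f x + g x).
Proof. intros [l1 H1] [l2 H2]; exists (l1 ++ l2); intros; rewrite sumT_app, H1, H2; auto. Qed.

Definition tmul (t s : R*R*R) : list (R*R*R) :=
  let '(A,B,a) := t in let '(C,D,b) := s in
  ((A*C - B*D)/2, (A*D+B*C)/2, a+b) :: ((A*C+B*D)/2, (B*C - A*D)/2, a-b) :: nil.

Lemma tmul_ok t s w : sumT (tmul t s) w = term t w * term s w.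
Proof. destruct t as [[A B] a]; destruct s as [[C D] b]; simpl.
  rewrite !Rmult_plus_distr_r, Rmult_minus_distr_r, cos_plus, sin_plus, cos_minus, sin_minus.
  field. Qed.

Fixpoint lmul (l1 l2 : list (R*R*R)) : list (R*R*R) :=
  match l1 with nil => nil | t :: r => flat_map (tmul t) l2 ++ lmul r l2 end.

Lemma lmul_ok l1 l2 w : sumT (lmul l1 l2) w = sumT l1 w * sumT l2 w.
Proof. induction l1; cbn [lmul sumT]; [ring|]. rewrite sumT_app, IHl1.
  assert (sumT (flat_map (tmul a) l2) w = term a w * sumT l2 w).
  { clear IHl1. induction l2; cbn [flat_map sumT]; [ring|]. rewrite sumT_app, IHl2, tmul_ok; ring. }
  rewrite H; ring. Qed.

Lemma T_mult f g : T f -> T g -> T (fun x => f x * g x).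
Proof. intros [l1 H1] [l2 H2]; exists (lmul l1 l2); intros; rewrite lmul_ok, H1, H2; auto. Qed.

Lemma T_const c : T (fun _ => c).
Proof. exists ((c,0,0)::nil); intros; simpl. rewrite Rmult_0_l, cos_0; ring. Qed.

Lemma T_opp f : T f -> T (fun x => - f x).
Proof. intros H. destruct (T_mult _ _ (T_const (-1)) H) as [l Hl]. exists l; intros w; rewrite <- Hl; ring. Qed.

Lemma T_loc f n x : T f -> locally x (fun y => forall k, (k <= n)%nat -> ex_derive_n f k y).
Proof. intros H. apply filter_forall. intros; apply T_ex_derive_n, H. Qed.

Lemma Derive_n_S f k x : Derive_n f (S k) x = Derive_n (Derive f) k x.
Proof. rewrite (Derive_n_ext (Derive f) (Derive_n f 1)) by reflexivity.
  rewrite Derive_n_comp. f_equal; lia. Qed.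

Lemma leib k : forall f g m, T f -> T g -> (forall i, (i < m)%nat -> Derive_n g i 0 = 0) ->
  ((k < m)%nat -> Derive_n (fun x => f x * g x) k 0 = 0) /\
  (k = m -> Derive_n (fun x => f x * g x) k 0 = f 0 * Derive_n g m 0).
Proof.
  induction k; intros f g m Tf Tg Hg.
  - split; intros. simpl. specialize (Hg 0%nat H); simpl in Hg; rewrite Hg; ring. subst; reflexivity.
  - rewrite Derive_n_S.
    rewrite (Derive_n_ext _ (fun x => Derive f x * g x + f x * Derive g x)).
    2:{ intros; apply Derive_mult; apply T_ex_derive; auto. }
    rewrite Derive_n_plus by (apply T_loc, T_mult; auto using T_Derive).
    assert (Hg' : forall i, (i < m - 1)%nat -> Derive_n (Derive g) i 0 = 0).
    { intros; rewrite <- Derive_n_S; apply Hg; lia. }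
    destruct (IHk (Derive f) g m (T_Derive _ Tf) Tg Hg) as [A1 _].
    destruct (IHk f (Derive g) (m-1)%nat Tf (T_Derive _ Tg) Hg') as [B1 B2].
    split; intros.
    + rewrite A1, B1 by lia; ring.
    + rewrite A1, B2 by lia. rewrite <- Derive_n_S. replace (S (m-1)) with m by lia. ring.
Qed.
Lemma T_ext f g : T f -> (forall w, g w = f w) -> T g.
Proof. intros [l H] E; exists l; intros; rewrite E; auto. Qed.

Definition TC (F : R -> C) := T (fun w => Re (F w)) /\ T (fun w => Im (F w)).

Lemma TC_eval_aux l : forall i, TC (eval_aux i l).
Proof. induction l; intros i; simpl.
  - split; apply T_ext with (fun _ => 0); try apply T_const; reflexivity.
  - destruct (IHl (i+1)%Z) as [H1 H2]. split.
    + apply T_ext with (fun w => term (fst a, - snd a, 2 * IZR i * PI) w + Re (eval_aux (i+1) l w)).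
      apply T_plus; auto. exists ((fst a, - snd a, 2 * IZR i * PI)::nil); intros; simpl; ring.
      intros w; unfold Re, cexpi, Cplus, Cmult; simpl; ring.
    + apply T_ext with (fun w => term (snd a, fst a, 2 * IZR i * PI) w + Im (eval_aux (i+1) l w)).
      apply T_plus; auto. exists ((snd a, fst a, 2 * IZR i * PI)::nil); intros; simpl; ring.
      intros w; unfold Im, cexpi, Cplus, Cmult; simpl; ring.
Qed.

Lemma TC_eval m : TC (eval m).
Proof. destruct (TC_eval_aux (snd m) (fst m)) as [H1 H2]. unfold eval; split.
  - apply T_ext with (fun w => (1/2) * Re (eval_aux (fst m) (snd m) w)).
    apply T_mult; auto using T_const. intros; unfold Re, Cmult, RtoC; simpl; ring.
  - apply T_ext with (fun w => (1/2) * Im (eval_aux (fst m) (snd m) w)).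
    apply T_mult; auto using T_const. intros; unfold Im, Cmult, RtoC; simpl; ring.
Qed.

Lemma cleib F G m : TC F -> TC G -> (forall i, (i < m)%nat -> deriv_vanishes G i) ->
  (forall k, (k < m)%nat -> deriv_vanishes (fun w => Cmult (F w) (G w)) k) /\
  ((Derive_n (fun w => Re (Cmult (F w) (G w))) m 0, Derive_n (fun w => Im (Cmult (F w) (G w))) m 0)
    = Cmult (F 0) (Derive_n (fun w => Re (G w)) m 0, Derive_n (fun w => Im (G w)) m 0)).
Proof.
  intros [Fr Fi] [Gr Gi] HG.
  assert (Er : forall k, Derive_n (fun w => Re (Cmult (F w) (G w))) k 0 =
     Derive_n (fun w => Re (F w) * Re (G w)) k 0 - Derive_n (fun w => Im (F w) * Im (G w)) k 0).
  { intros k. rewrite <- Derive_n_minus by (apply T_loc, T_mult; auto).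
    apply Derive_n_ext; intros; unfold Re, Im, Cmult; simpl; ring. }
  assert (Ei : forall k, Derive_n (fun w => Im (Cmult (F w) (G w))) k 0 =
     Derive_n (fun w => Re (F w) * Im (G w)) k 0 + Derive_n (fun w => Im (F w) * Re (G w)) k 0).
  { intros k. rewrite <- Derive_n_plus by (apply T_loc, T_mult; auto).
    apply Derive_n_ext; intros; unfold Re, Im, Cmult; simpl; ring. }
  assert (Hr : forall i, (i < m)%nat -> Derive_n (fun w => Re (G w)) i 0 = 0) by (intros; apply HG; auto).
  assert (Hi : forall i, (i < m)%nat -> Derive_n (fun w => Im (G w)) i 0 = 0) by (intros; apply HG; auto).
  split.
  - intros k Hk. unfold deriv_vanishes. rewrite Er, Ei.
    rewrite (proj1 (leib k _ _ m Fr Gr Hr) Hk), (proj1 (leib k _ _ m Fi Gi Hi) Hk),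
      (proj1 (leib k _ _ m Fr Gi Hi) Hk), (proj1 (leib k _ _ m Fi Gr Hr) Hk). split; ring.
  - rewrite Er, Ei.
    rewrite (proj2 (leib m _ _ m Fr Gr Hr) eq_refl), (proj2 (leib m _ _ m Fi Gi Hi) eq_refl),
      (proj2 (leib m _ _ m Fr Gi Hi) eq_refl), (proj2 (leib m _ _ m Fi Gr Hr) eq_refl).
    unfold Cmult, Re, Im; simpl. f_equal; ring.
Qed.
Fixpoint horner (l : list C) (z : C) : C :=
  match l with nil => RtoC 0 | c :: t => Cplus c (Cmult z (horner t z)) end.
Fixpoint padd (l1 l2 : list C) : list C :=
  match l1, l2 with
  | nil, _ => l2 | _, nil => l1
  | a :: t, b :: s => Cplus a b :: padd t s end.
Fixpoint pmul (l1 l2 : list C) : list C :=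
  match l1 with nil => nil | c :: t => padd (map (Cmult c) l2) (RtoC 0 :: pmul t l2) end.

Lemma padd_ok l1 : forall l2 z, horner (padd l1 l2) z = Cplus (horner l1 z) (horner l2 z).
Proof. induction l1; intros [|b s] z; simpl; try ring. rewrite IHl1; ring. Qed.
Lemma scal_ok c l z : horner (map (Cmult c) l) z = Cmult c (horner l z).
Proof. induction l; simpl; [ring|rewrite IHl; ring]. Qed.
Lemma pmul_ok l1 l2 z : horner (pmul l1 l2) z = Cmult (horner l1 z) (horner l2 z).
Proof. induction l1; simpl; [ring|]. rewrite padd_ok, scal_ok; simpl; rewrite IHl1; ring. Qed.

Lemma cexpi_add x y : cexpi (x + y) = Cmult (cexpi x) (cexpi y).
Proof. unfold cexpi, Cmult; simpl. rewrite cos_plus, sin_plus. f_equal; ring. Qed.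

Lemma eval_aux_horner l : forall i w, eval_aux i l w =
  Cmult (cexpi (2 * IZR i * PI * w)) (horner l (cexpi (2 * PI * w))).
Proof. induction l; intros i w; simpl; [ring|]. rewrite IHl.
  replace (2 * IZR (i+1) * PI * w) with (2 * IZR i * PI * w + 2 * PI * w) by (rewrite plus_IZR; ring).
  rewrite cexpi_add; ring. Qed.

Definition mmul (m1 m2 : mask) : mask :=
  ((fst m1 + fst m2)%Z, map (Cmult (RtoC (1/2))) (pmul (snd m1) (snd m2))).

Lemma mmul_ok m1 m2 w : eval (mmul m1 m2) w = Cmult (eval m1 w) (eval m2 w).
Proof. unfold eval, mmul; simpl. rewrite !eval_aux_horner, scal_ok, pmul_ok.
  replace (2 * IZR (fst m1 + fst m2) * PI * w) with (2 * IZR (fst m1) * PI * w + 2 * IZR (fst m2) * PI * w)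
    by (rewrite plus_IZR; ring).
  rewrite cexpi_add; ring. Qed.

Lemma trig_mul f g : is_trig_poly f -> is_trig_poly g -> is_trig_poly (fun w => Cmult (f w) (g w)).
Proof. intros [m1 H1] [m2 H2]; exists (mmul m1 m2); intros; rewrite mmul_ok, H1, H2; auto. Qed.

Lemma csum_app l1 l2 : csum (l1 ++ l2) = Cplus (csum l1) (csum l2).
Proof. induction l1; simpl; [ring|rewrite IHl1; ring]. Qed.

Lemma csum_scal (k : C) (B : list (R -> C)) (g : (R -> C) -> C) :
  csum (map (fun b => Cmult k (g b)) B) = Cmult k (csum (map g B)).
Proof. induction B; simpl; [ring|rewrite IHB; ring]. Qed.

Lemma uep_alg (a p : R -> C) (B Q : list (R -> C)) (w u : R) :
  let fam := map (fun b w => Cmult (p w) (b w)) B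
             ++ map (fun q w => Cmult (a w) (q w)) Q
             ++ flat_map (fun q => map (fun b w => Cmult (q w) (b w)) B) Q in
  Cplus (Cmult (Cmult (a w) (p w)) (Cconj (Cmult (a u) (p u))))
     (csum (map (fun q => Cmult (q w) (Cconj (q u))) fam)) =
  Cmult (Cplus (Cmult (a w) (Cconj (a u))) (csum (map (fun q => Cmult (q w) (Cconj (q u))) B)))
        (Cplus (Cmult (p w) (Cconj (p u))) (csum (map (fun q => Cmult (q w) (Cconj (q u))) Q))).
Proof.
  intros fam; unfold fam. rewrite !map_app, !csum_app, !map_map.
  set (SB := csum (map (fun q => Cmult (q w) (Cconj (q u))) B)).
  set (SQ := csum (map (fun q => Cmult (q w) (Cconj (q u))) Q)).
  rewrite (map_ext _ (fun b => Cmult (Cmult (p w) (Cconj (p u))) (Cmult (b w) (Cconj (b u)))))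
    by (intros; rewrite Cmult_conj; ring).
  rewrite (map_ext (fun x => Cmult (Cmult (a w) (x w)) (Cconj (Cmult (a u) (x u))))
      (fun b => Cmult (Cmult (a w) (Cconj (a u))) (Cmult (b w) (Cconj (b u)))))
    by (intros; rewrite Cmult_conj; ring).
  rewrite !csum_scal. fold SB SQ.
  assert (Hf : csum (map (fun q => Cmult (q w) (Cconj (q u)))
     (flat_map (fun q => map (fun b w => Cmult (q w) (b w)) B) Q)) = Cmult SQ SB).
  { unfold SQ. clear fam. induction Q as [|q Q IH]; simpl; [ring|].
    rewrite map_app, csum_app, IH, map_map.
    rewrite (map_ext _ (fun b => Cmult (Cmult (q w) (Cconj (q u))) (Cmult (b w) (Cconj (b u)))))
      by (intros; rewrite Cmult_conj; ring).
    rewrite csum_scal; fold SB; ring. }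
  rewrite Hf, Cmult_conj; ring.
Qed.
Lemma Cmult_nz x y : x <> RtoC 0 -> y <> RtoC 0 -> Cmult x y <> RtoC 0.
Proof. intros Hx Hy H. apply Hy. replace y with (Cmult (Cinv x) (Cmult x y)) by (field; auto).
  rewrite H; ring. Qed.

Lemma csum_zero0 (L : list (R -> C)) : (forall g, In g L -> g 0 = RtoC 0) ->
  csum (map (fun q => Cmult (q 0) (Cconj (q 0))) L) = RtoC 0.
Proof. induction L; intros H; simpl; [reflexivity|]. rewrite IHL by (intros; apply H; simpl; auto).
  rewrite (H a) by (simpl; auto). unfold Cconj, Cmult, Cplus, RtoC; simpl. f_equal; ring. Qed.

Lemma nz0 f L : UEP f L -> (forall g, In g L -> deriv_vanishes g 0) -> f 0 <> RtoC 0.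
Proof. intros [_ [_ [H _]]] HL E. specialize (H 0). rewrite csum_zero0 in H.
  - rewrite E in H. unfold Cconj, Cmult, Cplus, RtoC in H; simpl in H. injection H. intros. lra.
  - intros g Hg. destruct (HL g Hg) as [H1 H2]. simpl in H1, H2. unfold Re, Im in *.
    destruct (g 0) as [x y]; simpl in *; subst; reflexivity.
Qed.

Lemma nv_nz G m : ~ deriv_vanishes G m ->
  (Derive_n (fun w => Re (G w)) m 0, Derive_n (fun w => Im (G w)) m 0) <> RtoC 0.
Proof. intros H E. apply H. unfold RtoC in E; injection E; intros; split; auto. Qed.

Lemma nv_of F G m : TC F -> TC G -> (forall i, (i < m)%nat -> deriv_vanishes G i) ->
  F 0 <> RtoC 0 -> ~ deriv_vanishes G m -> ~ deriv_vanishes (fun w => Cmult (F w) (G w)) m.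
Proof. intros TF TG HG HF HN [H1 H2]. destruct (cleib F G m TF TG HG) as [_ E].
  apply (Cmult_nz _ _ HF (nv_nz _ _ HN)). rewrite <- E. rewrite H1, H2. reflexivity. Qed.

Lemma TC_in (L : list mask) f : In f (map eval L) -> TC f.
Proof. intros H; apply in_map_iff in H; destruct H as [m [<- _]]; apply TC_eval. Qed.

Theorem theorem2 (ma mp : mask) (bs qs : list mask) :
  let a := eval ma in
  let p := eval mp in
  let B := map eval bs in
  let Q := map eval qs in
  let fam := map (fun b w => Cmult (p w) (b w)) B
             ++ map (fun q w => Cmult (a w) (q w)) Q
             ++ flat_map (fun q => map (fun b w => Cmult (q w) (b w)) B) Q in
  UEP a B -> UEP p Q ->
  UEP (fun w => Cmult (a w) (p w)) fam /\
  (forall (mab : mask) (va vp : nat),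
     (forall w, eval mab w = Cmult (a w) (p w)) ->
     convergent ma -> convergent mp -> convergent mab ->
     has_vm B va -> has_vm Q vp ->
     has_vm fam (Nat.min va vp)).
Proof.
  intros a p B Q fam UA UP.
  assert (Hfam : forall f, In f fam ->
     (exists b, In b B /\ f = fun w => Cmult (p w) (b w)) \/
     (exists q, In q Q /\ f = fun w => Cmult (a w) (q w)) \/
     (exists q b, In q Q /\ In b B /\ f = fun w => Cmult (q w) (b w))).
  { intros f Hf. unfold fam in Hf. apply in_app_or in Hf; destruct Hf as [Hf|Hf].
    - left. apply in_map_iff in Hf; destruct Hf as [b [<- Hb]]; eauto.
    - apply in_app_or in Hf; destruct Hf as [Hf|Hf]; right.
      + left. apply in_map_iff in Hf; destruct Hf as [b [<- Hb]]; eauto.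
      + right. apply in_flat_map in Hf. destruct Hf as [q [Hq Hf]].
        apply in_map_iff in Hf; destruct Hf as [b [<- Hb]]; eauto. }
  assert (TCa : TC a) by apply TC_eval. assert (TCp : TC p) by apply TC_eval.
  split.
  - destruct UA as [Ta [TB [Ia Sa]]]; destruct UP as [Tp [TQ [Ip Sp]]].
    split; [apply trig_mul; auto|]. split.
    + intros f Hf. destruct (Hfam f Hf) as [[b [Hb ->]]|[[q [Hq ->]]|[q [b [Hq [Hb ->]]]]]];
        apply trig_mul; auto.
    + split; intros w.
      * pose proof (uep_alg a p B Q w w) as H. cbv zeta in H. fold fam in H.
        cbv beta. rewrite H, Ia, Ip. ring.
      * pose proof (uep_alg a p B Q w (w - 1/2)) as H. cbv zeta in H. fold fam in H.
        cbv beta. rewrite H, Sa. ring.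
  - intros mab va vp _ _ _ _ [VB [b [Hb NB]]] [VQ [q [Hq NQ]]]. split.
    + intros f Hf k Hk.
      destruct (Hfam f Hf) as [[b' [Hb' ->]]|[[q' [Hq' ->]]|[q' [b' [Hq' [Hb' ->]]]]]].
      * apply (proj1 (cleib p b' va TCp (TC_in bs b' Hb') (VB b' Hb'))); lia.
      * apply (proj1 (cleib a q' vp TCa (TC_in qs q' Hq') (VQ q' Hq'))); lia.
      * apply (proj1 (cleib q' b' va (TC_in qs q' Hq') (TC_in bs b' Hb') (VB b' Hb'))); lia.
    + destruct (le_lt_dec va vp) as [Hle|Hlt].
      * rewrite Nat.min_l by lia.
        destruct (classic (p 0 = RtoC 0)) as [P0|P0].
        -- assert (vp = 0%nat).
           { destruct vp; auto. exfalso. apply (nz0 p Q UP); auto.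
             intros g Hg; apply VQ; auto; lia. }
           subst vp. assert (va = 0%nat) by lia. subst va.
           exists (fun w => Cmult (q w) (b w)). split.
           ++ unfold fam. apply in_or_app; right; apply in_or_app; right.
              apply in_flat_map. exists q; split; auto.
              apply (in_map (fun b w => Cmult (q w) (b w))); auto.
           ++ apply nv_of. apply (TC_in qs); auto. apply (TC_in bs); auto. intros; lia.
              intros E. apply NQ. unfold deriv_vanishes; simpl; rewrite E; split; reflexivity. exact NB.
        -- exists (fun w => Cmult (p w) (b w)). split.
           ++ unfold fam. apply in_or_app; left. apply (in_map (fun b w => Cmult (p w) (b w))); auto.
           ++ apply nv_of; auto. apply (TC_in bs); auto.
      * rewrite Nat.min_r by lia.
        assert (A0 : a 0 <> RtoC 0).
        { destruct va; [lia|]. apply (nz0 a B UA). intros g Hg; apply VB; auto; lia. }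
        exists (fun w => Cmult (a w) (q w)). split.
        ++ unfold fam. apply in_or_app; right; apply in_or_app; left.
           apply (in_map (fun q w => Cmult (a w) (q w))); auto.
        ++ apply nv_of; auto. apply (TC_in qs); auto.
Qed.
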